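(* Let $E$ be a nonempty closed convex subset of a real Hilbert space $H$. Let $f:E\times E\to\mathbb{R}$ be a bifunction satisfying conditions (A1)–(A4) below, and let $S:E\to E$ be a $(\lambda,\gamma)$-generalized hybrid mapping for some $\lambda,\gamma\in\mathbb{R}$, with $F(S)\cap EP(f)\neq\emptyset$. Let $\{r_n\}\subset(0,\infty)$ satisfy $\liminf_{n\to\infty}r_n>0$ and let $\{\beta_n\}$ be a sequence in $[b,1]$ for some $b\in(0,1)$ with $\liminf_{n\to\infty}\beta_n(1-\beta_n)>0$. Let $\{x_n\}$ and $\{u_n\}$ be generated by $x_1=x\in E$ and, for all $n\in\mathbb{N}$, $$u_n\in E \text{ such that } f(u_n,y)+\frac{1}{r_n}\langle y-u_n,u_n-x_n\rangle\ge 0\quad\text{for all } y\in E,$$ $$x_{n+1}=S\big((1-\beta_n)x_n+\beta_n Su_n\big).$$ Then $\{x_n\}$ converges weakly to a point $v\in F(S)\cap EP(f)$, where $v=\lim_{n\to\infty}P_{F(S)\cap EP(f)}(x_n)$.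
   Context: $F(S)=\{x\in E: Sx=x\}$. A mapping $S:E\to E$ is $(\lambda,\gamma)$-generalized hybrid if $\lambda\|Sx-Sy\|^2+(1-\lambda)\|x-Sy\|^2\le \gamma\|Sx-y\|^2+(1-\gamma)\|x-y\|^2$ for all $x,y\in E$. $EP(f)=\{x\in E: f(x,y)\ge 0 \text{ for all } y\in E\}$. Conditions: (A1) $f(x,x)=0$ for all $x\in E$; (A2) $f(x,y)+f(y,x)\le 0$ for all $x,y\in E$; (A3) for all $x,y,z\in E$, $\lim_{t\downarrow 0} f(tz+(1-t)x,y)\le f(x,y)$; (A4) for each $x\in E$, $y\mapsto f(x,y)$ is convex and lower semicontinuous. $P_K$ is the metric projection of $H$ onto a nonempty closed convex set $K$; the limit defining $v$ is in norm. *)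

(* Defs.v *)
From HB Require Import structures.
From mathcomp Require Import all_boot all_order all_algebra.
From mathcomp Require Import all_classical all_reals all_analysis.
Set Implicit Arguments. Unset Strict Implicit. Unset Printing Implicit Defensive.
Import Order.TTheory GRing.Theory Num.Theory.
Import numFieldNormedType.Exports.
Local Open Scope classical_set_scope.
Local Open Scope ring_scope.

Section Defs.
Context {R : realType} {V : normedModType R}.

(* ip is a real inner product inducing the norm of V.  Together with
   V : completeNormedModType R this makes V a real Hilbert space. *)
Definition is_inner_product (ip : V -> V -> R) : Prop :=
  (forall x y, ip x y = ip y x) /\
  (forall (a : R) x y z, ip (a *: x + y) z = a * ip x z + ip y z) /\
  (forall x, `|x| ^+ 2 = ip x x).

Definition convex_set_in (E : set V) : Prop :=
  forall x y (t : R), E x -> E y -> 0 <= t <= 1 -> E (t *: x + (1 - t) *: y).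

Definition fixed_points (E : set V) (S : V -> V) : set V :=
  [set x | E x /\ S x = x].

Definition EP (E : set V) (f : V -> V -> R) : set V :=
  [set x | E x /\ forall y, E y -> 0 <= f x y].

Definition generalized_hybrid (E : set V) (S : V -> V) (lam gam : R) : Prop :=
  forall x y, E x -> E y ->
    lam * `|S x - S y| ^+ 2 + (1 - lam) * `|x - S y| ^+ 2
    <= gam * `|S x - y| ^+ 2 + (1 - gam) * `|x - y| ^+ 2.

Definition cond_A1 (E : set V) (f : V -> V -> R) : Prop :=
  forall x, E x -> f x x = 0.
Definition cond_A2 (E : set V) (f : V -> V -> R) : Prop :=
  forall x y, E x -> E y -> f x y + f y x <= 0.
(* lim_{t down 0} f(tz+(1-t)x, y) <= f(x,y), read as limsup *)
Definition cond_A3 (E : set V) (f : V -> V -> R) : Prop :=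
  forall x y z, E x -> E y -> E z ->
    forall eps : R, 0 < eps ->
      \forall t \near 0^'+, f (t *: z + (1 - t) *: x) y <= f x y + eps.
Definition cond_A4 (E : set V) (f : V -> V -> R) : Prop :=
  forall x, E x ->
    (forall y1 y2 (t : R), E y1 -> E y2 -> 0 <= t <= 1 ->
       f x (t *: y1 + (1 - t) *: y2) <= t * f x y1 + (1 - t) * f x y2) /\
    (forall y, E y -> forall eps : R, 0 < eps ->
       \forall y' \near y, E y' -> f x y - eps < f x y').

Definition is_metric_proj (K : set V) (x p : V) : Prop :=
  K p /\ forall q, K q -> `|x - p| <= `|x - q|.

Definition weak_cvg (ip : V -> V -> R) (u : nat -> V) (v : V) : Prop :=
  forall y, (fun n => ip (u n) y) @ \oo --> ip v y.

End Defs.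

(* Main.v *)
Require Import Defs.
From HB Require Import structures.
From mathcomp Require Import all_boot all_order all_algebra.
From mathcomp Require Import all_classical all_reals all_analysis.
From mathcomp Require Import ring lra.
Import Order.TTheory GRing.Theory Num.Theory.
Import numFieldNormedType.Exports.
Local Open Scope classical_set_scope.
Local Open Scope ring_scope.
Set Implicit Arguments. Unset Strict Implicit. Unset Printing Implicit Defensive.
Lemma sqr_normr (R : realDomainType) (x : R) : `|x| ^+ 2 = x ^+ 2.
Proof. by rewrite real_normK ?num_real. Qed.

Section IP.
Variables (R : realType) (V : normedModType R) (ip : V -> V -> R).
Hypothesis Hip : is_inner_product ip.

Lemma ipC x y : ip x y = ip y x.
Proof. by case: Hip. Qed.
Lemma ipZDl a x y z : ip (a *: x + y) z = a * ip x z + ip y z.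
Proof. by case: Hip => _ []. Qed.
Lemma ipnorm x : `|x| ^+ 2 = ip x x.
Proof. by case: Hip => _ []. Qed.
Lemma ip0l z : ip 0 z = 0.
Proof.
have := ipZDl 1 0 0 z; rewrite scale1r addr0 mul1r => h.
lra.
Qed.
Lemma ipDl x y z : ip (x + y) z = ip x z + ip y z.
Proof. by rewrite -[x]scale1r ipZDl mul1r scale1r. Qed.
Lemma ipZl a x z : ip (a *: x) z = a * ip x z.
Proof. by rewrite -[a *: x]addr0 ipZDl ip0l addr0. Qed.
Lemma ipNl x z : ip (- x) z = - ip x z.
Proof. by rewrite -scaleN1r ipZl mulN1r. Qed.
Lemma ipBl x y z : ip (x - y) z = ip x z - ip y z.
Proof. by rewrite ipDl ipNl. Qed.
Lemma ip0r z : ip z 0 = 0.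
Proof. by rewrite ipC ip0l. Qed.
Lemma ipDr x y z : ip z (x + y) = ip z x + ip z y.
Proof. by rewrite ipC ipDl !(ipC z). Qed.
Lemma ipZr a x z : ip z (a *: x) = a * ip z x.
Proof. by rewrite ipC ipZl ipC. Qed.
Lemma ipNr x z : ip z (- x) = - ip z x.
Proof. by rewrite ipC ipNl ipC. Qed.
Lemma ipBr x y z : ip z (x - y) = ip z x - ip z y.
Proof. by rewrite ipDr ipNr. Qed.
Lemma ipxx x : ip x x = `|x| ^+ 2.
Proof. by rewrite ipnorm. Qed.
Lemma ipxx_ge0 x : 0 <= ip x x.
Proof. by rewrite ipxx sqr_ge0. Qed.

Lemma normD2 x y : `|x + y| ^+ 2 = `|x| ^+ 2 + 2 * ip x y + `|y| ^+ 2.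
Proof. rewrite !ipnorm ipDl !ipDr (ipC y x); ring. Qed.
Lemma normB2 x y : `|x - y| ^+ 2 = `|x| ^+ 2 - 2 * ip x y + `|y| ^+ 2.
Proof. by rewrite normD2 ipNr normrN; ring. Qed.

Lemma CS x y : `|ip x y| <= `|x| * `|y|.
Proof.
have [->|y0] := eqVneq y 0; first by rewrite ip0r normr0 normr0 mulr0.
have ny : 0 < `|y| ^+ 2 by rewrite exprn_gt0 // normr_gt0.
set t := ip x y / `|y| ^+ 2.
have h := sqr_ge0 `|x - t *: y|.
rewrite normB2 ipZr normrZ exprMn sqr_normr in h.
have e : 2 * (t * ip x y) - t ^+ 2 * `|y| ^+ 2 = ip x y ^+ 2 / `|y| ^+ 2.
  by rewrite /t; field; rewrite normr_eq0.
have h2 : ip x y ^+ 2 <= (`|x| * `|y|) ^+ 2.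
  have e2 : ip x y ^+ 2 = (ip x y ^+ 2 / `|y| ^+ 2) * `|y| ^+ 2.
    by field; rewrite normr_eq0.
  rewrite exprMn e2; set d := _ / _ in e e2 *.
  have hd : d <= `|x| ^+ 2 by lra.
  nra.
rewrite -ler_sqr ?nnegrE ?mulr_ge0 // sqr_normr //.
Qed.

Lemma CSle x y : ip x y <= `|x| * `|y|.
Proof. exact: le_trans (ler_norm _) (CS x y). Qed.

Lemma norm_convex (t : R) (a c : V) :
  `|t *: a + (1 - t) *: c| ^+ 2 =
  t * `|a| ^+ 2 + (1 - t) * `|c| ^+ 2 - t * (1 - t) * `|a - c| ^+ 2.
Proof.
rewrite normD2 normB2 !normrZ !exprMn !sqr_normr ipZl ipZr; ring.
Qed.

Lemma norm_eq0_sq (x : V) : `|x| ^+ 2 <= 0 -> x = 0.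
Proof.
move=> h; apply/normr0_eq0/eqP; rewrite -sqrf_eq0 eq_le h sqr_ge0 //.
Qed.

End IP.
Section Min.
Variables (R : realType) (V : completeNormedModType R) (ip : V -> V -> R).
Hypothesis Hip : is_inner_product ip.

Lemma lin0 (phi : V -> R) :
  (forall a z w, phi (a *: z + w) = a * phi z + phi w) -> phi 0 = 0.
Proof.
move=> hl; have := hl 1 0 0; rewrite scale1r addr0 mul1r; lra.
Qed.

Lemma min_exists (K : set V) (phi : V -> R) (M : R) :
  closed K -> convex_set_in K -> K !=set0 ->
  (forall a z w, phi (a *: z + w) = a * phi z + phi w) ->
  (forall z, `|phi z| <= M * `|z|) ->
  exists2 w, K w & forall z, K z ->
    `|w| ^+ 2 - 2 * phi w <= `|z| ^+ 2 - 2 * phi z.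
Proof.
move=> Kcl Kcv [k0 Kk0] hl hM.
have phi0 := lin0 hl.
have phiZ : forall a z, phi (a *: z) = a * phi z.
  by move=> a z; rewrite -[a *: z]addr0 hl phi0 addr0.
have phiD : forall z w, phi (z + w) = phi z + phi w.
  by move=> z w; rewrite -[z]scale1r hl mul1r scale1r.
set h := fun z : V => `|z| ^+ 2 - 2 * phi z.
have hlb : forall z, - M ^+ 2 <= h z.
  move=> z; rewrite /h; have := hM z; have := ler_norm (phi z).
  have := sqr_ge0 (`|z| - M); nra.
set A := [set h z | z in K].
have hA : has_inf A.
  split; first by exists (h k0), k0.
  by exists (- M ^+ 2) => _ [z Kz <-]; exact: hlb.
set m := inf A.
have hm : forall z, K z -> m <= h z.
  by move=> z Kz; apply: ge_inf; [case: hA|exists z].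
have hmid : forall a c, K a -> K c ->
    `|a - c| ^+ 2 <= 2 * (h a + h c) - 4 * m.
  move=> a c Ka Kc.
  have Km : K (2^-1 *: a + (1 - 2^-1) *: c).
    by apply: Kcv => //; apply/andP; split; lra.
  have := hm _ Km; rewrite /h (norm_convex Hip) hl phiZ.
  have -> : (1 - 2^-1 : R) = 2^-1 by field.
  lra.
set L := fun d : R => [set z | K z /\ h z < m + d].
set F := filter_from [set d : R | 0 < d] L.
have FF : Filter F.
  apply: filter_from_filter; first by exists 1; rewrite /= ltr01.
  move=> i j /= i0 j0; exists (Order.min i j); first by rewrite /= lt_min i0 j0.
  move=> z [Kz hz]; split; split => //; apply: (lt_le_trans hz);
    rewrite lerD2l ?ge_min ?le_refl ?orbT //.
have PF : ProperFilter F.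
  apply: filter_from_proper => // d d0.
  have [_ [z Kz <-] hz] := inf_adherent d0 hA.
  by exists z; split.
have cF : cvg F.
  apply: cauchy_cvg; apply: cauchy_exP => eps eps0.
  have d0 : 0 < eps ^+ 2 / 4 by rewrite divr_gt0 // exprn_gt0.
  have [_ [z Kz <-] hz] := inf_adherent d0 hA.
  exists z; exists (eps ^+ 2 / 4) => // a [Ka ha].
  rewrite -ball_normE /ball_ /=.
  have := hmid _ _ Kz Ka.
  move=> hh; rewrite -/m in hz; have := normr_ge0 (z - a).
  rewrite /h in hh hz ha; nra.
set w := lim F.
have Fw : F --> w by exact: cF.
have Kw : K w.
  apply: (@closed_cvg V V F PF id K Kcl _ w Fw).
  by exists 1 => //= z [].
exists w => // z Kz; apply: le_trans (hm _ Kz).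
set c := 1 + 2 * (`|w| + `|M|).
have c0 : 0 < c by rewrite /c; have := normr_ge0 w; have := normr_ge0 M; lra.
apply/ler_addgt0Pr => e e0.
have ec0 : 0 < e / c by rewrite divr_gt0.
have Fb : F (ball w (e / c)) by apply: Fw; apply: nbhsx_ballx.
have Fd : F (L (e / c)) by exists (e / c).
have [a [[Ka ha] ba]] := filter_ex (filterI Fd Fb).
move: ba; rewrite -ball_normE /ball_ /= => ba.
have ea : a = w + (a - w) by rewrite addrC subrK.
have gen : forall e, h (w + e) = h w + 2 * ip w e + `|e| ^+ 2 - 2 * phi e.
  by move=> e'; rewrite /h (normD2 Hip) phiD; ring.
have hw := gen (a - w); rewrite -ea in hw.
have n1 : `|a - w| < e / c by rewrite distrC.
have n2 := CS Hip w (a - w).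
have n2' := ler_norm (- ip w (a - w)); rewrite normrN in n2'.
have n2'' := ler_norm (ip w (a - w)).
have n3 := hM (a - w).
have n4 := ler_norm (phi (a - w)).
have n5 : M <= `|M| := ler_norm M.
have n6 := normr_ge0 (a - w).
have n7 := normr_ge0 w.
have ece : e / c * c = e by field; rewrite gt_eqF.
have p1 : `|w| * `|a - w| <= `|w| * (e / c) by rewrite ler_wpM2l // ltW.
have p2 : `|M| * `|a - w| <= `|M| * (e / c) by rewrite ler_wpM2l // ltW.
have p3 : M * `|a - w| <= `|M| * `|a - w| by rewrite ler_wpM2r.
have n8 := sqr_ge0 `|a - w|.
have n9 := ler_norm (- phi (a - w)); rewrite normrN in n9.
have : h w <= m + e / c + (2 * `|w| + 2 * `|M|) * (e / c).
  lra.
have -> : (2 * `|w| + 2 * `|M|) * (e / c) = e - e / c.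
  by rewrite -{2}ece /c; ring.
rewrite /h; lra.
Qed.
End Min.
Lemma small_t (R : realType) (a b : R) :
  (forall t, 0 < t -> t <= 1 -> a <= t * b) -> a <= 0.
Proof.
move=> h; apply/ler_addgt0Pr => e e0; rewrite add0r.
have b1 : 0 < `|b| + 1 by have := normr_ge0 b; lra.
set t := Order.min 1 (e / (`|b| + 1)).
have t0 : 0 < t by rewrite /t lt_min ltr01 divr_gt0.
have t1 : t <= 1 by rewrite /t ge_min lexx.
have t2 : t <= e / (`|b| + 1) by rewrite /t ge_min lexx orbT.
have := h t t0 t1.
have : t * b <= t * `|b| by apply: ler_wpM2l; [exact: ltW| exact: ler_norm].
have : t * `|b| <= e / (`|b| + 1) * `|b| by rewrite ler_wpM2r.
have : e / (`|b| + 1) * `|b| <= e.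
  have q : `|b| / (`|b| + 1) <= 1.
    by rewrite ler_pdivrMr // mul1r; lra.
  rewrite mulrAC -mulrA; nra.
lra.
Qed.

Section Proj.
Variables (R : realType) (V : completeNormedModType R) (ip : V -> V -> R).
Hypothesis Hip : is_inner_product ip.

Lemma vec_eq1 (t : R) (x p q : V) :
  x - (t *: q + (1 - t) *: p) = (x - p) - t *: (q - p).
Proof.
rewrite scalerBl scale1r scalerBr !opprD !opprK !addrA.
congr (_ + _); rewrite addrAC -!addrA; congr (_ + _); rewrite addrC.
Qed.

Lemma proj_exists (K : set V) (x : V) :
  closed K -> convex_set_in K -> K !=set0 -> exists p, is_metric_proj K x p.
Proof.
move=> Kcl Kcv K0.
have hl : forall a z w, ip x (a *: z + w) = a * ip x z + ip x w.
  by move=> a z w; rewrite (ipC Hip) (ipZDl Hip) !(ipC Hip _ x).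
have [w Kw hw] := @min_exists R V ip Hip K (ip x) `|x| Kcl Kcv K0
  hl (fun z => CS Hip x z).
exists w; split => // q Kq; have := hw q Kq.
move=> hh.
have e1 := normB2 Hip x w; have e2 := normB2 Hip x q.
have := normr_ge0 (x - w); have := normr_ge0 (x - q).
nra.
Qed.

Lemma proj_var (K : set V) (x p q : V) :
  convex_set_in K -> is_metric_proj K x p -> K q -> ip (x - p) (q - p) <= 0.
Proof.
move=> Kcv [Kp hp] Kq.
have h2 : 2 * ip (x - p) (q - p) <= 0.
  apply: (@small_t R _ (`|q - p| ^+ 2)) => t t0 t1.
  have Kz : K (t *: q + (1 - t) *: p) by apply: Kcv => //; rewrite ltW ?t0.
  have := hp _ Kz; rewrite vec_eq1 => hh.
  have : `|x - p| ^+ 2 <= `|x - p - t *: (q - p)| ^+ 2.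
    by rewrite ler_pXn2r ?nnegrE.
  rewrite [X in _ <= X](normB2 Hip) (ipZr Hip) normrZ exprMn sqr_normr.
  nra.
lra.
Qed.

Lemma proj_uniq (K : set V) (x p p' : V) :
  convex_set_in K -> is_metric_proj K x p -> is_metric_proj K x p' -> p = p'.
Proof.
move=> Kcv hp hp'.
have h1 := proj_var Kcv hp (proj1 hp').
have h2 := proj_var Kcv hp' (proj1 hp).
have e : `|p - p'| ^+ 2 = ip (x - p) (p' - p) + ip (x - p') (p - p').
  rewrite (ipnorm Hip) !(ipBl Hip) !(ipBr Hip) !(ipC Hip x); ring.
apply/eqP; rewrite -subr_eq0; apply/eqP; apply: norm_eq0_sq; lra.
Qed.

Lemma riesz (phi : V -> R) (M : R) :
  (forall a z w, phi (a *: z + w) = a * phi z + phi w) ->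
  (forall z, `|phi z| <= M * `|z|) ->
  exists w, forall z, phi z = ip w z.
Proof.
move=> hl hM.
have [w _ hw] := @min_exists R V ip Hip setT phi M closedT
  (fun _ _ _ _ _ _ => I) (ex_intro _ 0 I) hl hM.
exists w.
have phi0 := lin0 hl.
have phiZ : forall a z, phi (a *: z) = a * phi z.
  by move=> a z; rewrite -[a *: z]addr0 hl phi0 addr0.
have phiD : forall z w, phi (z + w) = phi z + phi w.
  by move=> z w'; rewrite -[z]scale1r hl mul1r scale1r.
have key : forall z, phi z - ip w z <= 0.
  move=> z; have h2 : 2 * (phi z - ip w z) <= 0.
    apply: (@small_t R _ (`|z| ^+ 2)) => t t0 t1.
    have := hw (w + t *: z) I.
    rewrite (normD2 Hip) phiD phiZ (ipZr Hip) normrZ exprMn sqr_normr.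
    nra.
  lra.
move=> z; have := key z; have := key (- z).
rewrite -scaleN1r phiZ (ipZr Hip); lra.
Qed.

End Proj.
Section Ultra.
Variables (R : realType) (U : set_system nat).
Hypothesis HU : UltraFilter U.
Hypothesis HUo : (\oo : set_system nat) `<=` U.

Definition ul (a : nat -> R) := lim (a n @[n --> U]).

Definition bdd (a : nat -> R) := exists M, forall n, `|a n| <= M.

Lemma ul_cvg (a : nat -> R) : bdd a -> a n @[n --> U] --> ul a.
Proof.
move=> [M hM].
have PF : ProperFilter (a n @[n --> U]) by apply: fmap_proper_filter.
have hc := @segment_compact R (- M) M.
have Fs : U (a @^-1` `[- M, M]%classic).
  apply: filterS (@filterT _ U _) => n _ /=.
  rewrite in_itv /= -ler_norml; exact: hM.
have [p [_ cp]] := hc _ PF Fs.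
suff ap : a n @[n --> U] --> p by apply: cvgP ap.
move=> B Bp; have [//|UC] := in_ultra_setVsetC (a @^-1` B) HU.
have : (a n @[n --> U]) (~` B) by [].
move=> hC; have [y [yC yB]] := cp _ _ hC Bp.
by case: yC.
Qed.

Lemma ul_cvgn (a : nat -> R) l : a n @[n --> \oo] --> l -> ul a = l.
Proof.
move=> h; apply: cvg_lim => //.
by move=> B /h; apply: HUo.
Qed.

Lemma ul_ext (a b : nat -> R) : (forall n, a n = b n) -> ul a = ul b.
Proof. by move=> h; have -> : a = b by apply: funext. Qed.

Lemma bddD a b : bdd a -> bdd b -> bdd (fun n => a n + b n).
Proof.
move=> [M hM] [N hN]; exists (M + N) => n.
by apply: le_trans (ler_normD _ _) _; apply: lerD.
Qed.

Lemma bddZ c a : bdd a -> bdd (fun n => c * a n).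
Proof.
move=> [M hM]; exists (`|c| * M) => n; rewrite normrM.
by apply: ler_wpM2l.
Qed.

Lemma bdd_cst c : bdd (fun _ => c).
Proof. by exists `|c|. Qed.

Lemma ul_cst c : ul (fun _ => c) = c.
Proof. by apply: ul_cvgn; apply: cvg_cst. Qed.

Lemma ulD a b : bdd a -> bdd b -> ul (fun n => a n + b n) = ul a + ul b.
Proof.
move=> ha hb; apply: cvg_lim => //.
by apply: cvgD; apply: ul_cvg.
Qed.

Lemma ulZ c a : bdd a -> ul (fun n => c * a n) = c * ul a.
Proof.
move=> ha; apply: cvg_lim => //.
by apply: cvgMr; apply: ul_cvg.
Qed.

Lemma ul_le a b : bdd a -> bdd b ->
  (\forall n \near \oo, a n <= b n) -> ul a <= ul b.
Proof.
move=> ha hb hle.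
have hna : bdd (fun n => - a n).
  by case: ha => M hM; exists M => n; rewrite normrN.
have hd : bdd (fun n => b n - a n) by apply: bddD.
have : 0 <= ul (fun n => b n - a n).
  apply: limr_ge; first by apply: cvgP (ul_cvg hd).
  by apply: HUo; apply: filterS hle => n /=; rewrite subr_ge0.
rewrite ulD //.
have -> : ul (fun n => - a n) = - ul a.
  rewrite -mulN1r -ulZ //; by apply: ul_ext => n; rewrite mulN1r.
lra.
Qed.

Lemma ul_le0 a : bdd a -> (forall e, 0 < e -> \forall n \near \oo, a n <= e) ->
  ul a <= 0.
Proof.
move=> ha h; apply/ler_addgt0Pr => e e0; rewrite add0r.
by rewrite -(ul_cst e); apply: ul_le => //; [exact: bdd_cst| exact: h].
Qed.

Lemma ul_bound a M : (forall n, `|a n| <= M) -> `|ul a| <= M.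
Proof.
move=> hM; have ha : bdd a by exists M.
rewrite ler_norml; apply/andP; split.
  rewrite -(ul_cst (- M)); apply: ul_le => //; first exact: bdd_cst.
  by apply: nearW => n; have := hM n; rewrite ler_norml => /andP[].
rewrite -(ul_cst M); apply: ul_le => //; first exact: bdd_cst.
by apply: nearW => n; have := hM n; rewrite ler_norml => /andP[].
Qed.

End Ultra.
Section WeakUl.
Variables (R : realType) (V : completeNormedModType R) (ip : V -> V -> R).
Hypothesis Hip : is_inner_product ip.
Variable (U : set_system nat).
Hypothesis HU : UltraFilter U.
Hypothesis HUo : (\oo : set_system nat) `<=` U.

Lemma bdd_ip (x : nat -> V) B z : (forall n, `|x n| <= B) ->
  bdd (fun n => ip (x n) z).
Proof.
move=> hB; exists (B * `|z|) => n.
apply: le_trans (CS Hip _ _) _; apply: ler_wpM2r => //.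
Qed.

Lemma weak_ul (x : nat -> V) B : (forall n, `|x n| <= B) ->
  exists w, forall z, ul U (fun n => ip (x n) z) = ip w z.
Proof.
move=> hB.
set phi := fun z => ul U (fun n => ip (x n) z).
have hl : forall a z w, phi (a *: z + w) = a * phi z + phi w.
  move=> a z w; rewrite /phi -(ulZ HU); last exact: (bdd_ip _ hB).
  rewrite -(ulD HU); [|apply: bddZ; exact: (bdd_ip _ hB)|exact: (bdd_ip _ hB)].
  by apply: ul_ext => n; rewrite (ipC Hip) (ipZDl Hip) !(ipC Hip (x n)).
have hM : forall z, `|phi z| <= B * `|z|.
  move=> y; apply: (ul_bound HU HUo) => n.
  apply: le_trans (CS Hip _ _) _; apply: ler_wpM2r => //.
have [w hw] := riesz Hip hl hM.
by exists w.
Qed.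

Lemma weak_closed (K : set V) (z : nat -> V) B w :
  closed K -> convex_set_in K -> K !=set0 ->
  (forall n, `|z n| <= B) ->
  (\forall n \near \oo, K (z n)) ->
  (forall y, ul U (fun n => ip (z n) y) = ip w y) -> K w.
Proof.
move=> Kcl Kcv K0 hB hK hw.
have [e he] := proj_exists Hip w Kcl Kcv K0.
suff : w = e by move=> ->; case: he.
have hle : ul U (fun n => ip (z n) (w - e) - ip e (w - e)) <= ul U (fun _ => 0).
  apply: (ul_le HU HUo).
  - by apply: bddD; [exact: (bdd_ip _ hB)| exact: bdd_cst].
  - exact: bdd_cst.
  apply: filterS hK => n Kzn.
  have := proj_var Hip Kcv he Kzn.
  by rewrite (ipC Hip) (ipBl Hip).
rewrite (ulD HU) in hle; [|exact: (bdd_ip _ hB)|exact: bdd_cst].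
rewrite hw !(ul_cst HU HUo) in hle.
have : `|w - e| ^+ 2 <= 0 by rewrite (ipnorm Hip) (ipBl Hip).
move/norm_eq0_sq => /eqP; rewrite subr_eq0 => /eqP //.
Qed.

End WeakUl.
Lemma liminf_pos (R : realType) (a : nat -> R) :
  (0 < limn_einf (fun n => (a n)%:E))%E ->
  exists2 k : R, 0 < k & \forall n \near \oo, k <= a n.
Proof.
rewrite limn_einf_lim (cvg_lim _ (@cvg_einfs_sup R _)) //.
move=> /ereal_sup_gt [_ [N _ <-] hN].
have lb : forall n, (N <= n)%N -> (einfs (fun n => (a n)%:E) N <= (a n)%:E)%E.
  by move=> n Nn; apply: ereal_inf_lbound; exists n.
move: hN lb; case: (einfs _ N) => [r| |] hr lb.
- exists r; first by rewrite -lte_fin.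
  by exists N => // n /= Nn; rewrite -lee_fin; apply: lb.
- exists 1; first exact: ltr01.
  by exists N => // n /= Nn; have := lb n Nn; rewrite leye_eq.
- by [].
Qed.

Lemma sq_to0 (R : realType) (e c : nat -> R) :
  (forall n, 0 <= e n) -> c n @[n --> \oo] --> 0 ->
  (\forall n \near \oo, e n ^+ 2 <= c n) -> e n @[n --> \oo] --> 0.
Proof.
move=> e0 hc hle; apply/cvgrPdist_lt => eps eps0.
have e2 : 0 < eps ^+ 2 by rewrite exprn_gt0.
have := @cvgr_lt _ _ _ _ _ _ hc _ e2.
move=> h; apply: (filterS2 _ _ (h _) hle) => n h1 h2.
rewrite sub0r normrN ger0_norm //.
have := e0 n; nra.

Qed.

Lemma poly_to0 (R : realType) (e : nat -> R) (K : R) :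
  e n @[n --> \oo] --> 0 ->
  forall eps, 0 < eps -> \forall n \near \oo, K * e n + K * e n ^+ 2 <= eps.
Proof.
move=> he eps eps0.
have : (K * e n + K * e n ^+ 2) @[n --> \oo] --> K * 0 + K * 0 ^+ 2.
  apply: cvgD; first exact: cvgMr.
  by apply: cvgMr; rewrite expr2; apply: cvgM.
rewrite mulr0 expr0n /= mulr0 addr0 => h.
by apply: filterS (@cvgr_lt _ _ _ _ _ _ h _ eps0) => n /ltW.
Qed.

Section Vec.
Variables (R : realType) (V : normedModType R) (ip : V -> V -> R).
Hypothesis Hip : is_inner_product ip.

Lemma normsplit (a b c : V) :
  `|a - c| ^+ 2 = `|a - b| ^+ 2 + 2 * ip (a - b) (b - c) + `|b - c| ^+ 2.
Proof.
have -> : a - c = (a - b) + (b - c) by rewrite addrA subrK.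
exact: normD2.
Qed.

Lemma vec_conv (t : R) (a c q : V) :
  t *: (a - q) + (1 - t) *: (c - q) = (t *: a + (1 - t) *: c) - q.
Proof.
have hq : q = t *: q + (1 - t) *: q by rewrite -scalerDl addrC subrK scale1r.
rewrite {3}hq !scalerBr opprD addrACA //.
Qed.

Lemma vec_sub (a c q : V) : (a - q) - (c - q) = a - c.
Proof. by rewrite opprB addrA subrK. Qed.

End Vec.
Section Main.
Variables (R : realType) (V : completeNormedModType R)
  (ip : V -> V -> R) (E : set V) (f : V -> V -> R) (S : V -> V)
  (lam gam : R) (r beta : nat -> R) (b : R) (x0 : V) (x u : nat -> V).
Hypothesis Hip : is_inner_product ip.
Hypothesis HE0 : E !=set0.
Hypothesis HEcl : closed E.
Hypothesis HEcv : convex_set_in E.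
Hypothesis HA1 : cond_A1 E f.
Hypothesis HA2 : cond_A2 E f.
Hypothesis HA3 : cond_A3 E f.
Hypothesis HA4 : cond_A4 E f.
Hypothesis HSE : forall y, E y -> E (S y).
Hypothesis Hhyb : generalized_hybrid E S lam gam.
Hypothesis HC0 : fixed_points E S `&` EP E f !=set0.
Hypothesis Hr : forall n, 0 < r n.
Hypothesis Hrinf : (0 < limn_einf (fun n => (r n)%:E))%E.
Hypothesis Hb : 0 < b < 1.
Hypothesis Hbeta : forall n, b <= beta n <= 1.
Hypothesis Hbinf : (0 < limn_einf (fun n => (beta n * (1 - beta n))%:E))%E.
Hypothesis Hx0 : E x0.
Hypothesis Hx00 : x 0%N = x0.
Hypothesis Hu : forall n, E (u n) /\
     forall y, E y -> 0 <= f (u n) y + (r n)^-1 * ip (y - u n) (u n - x n).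
Hypothesis Hxs : forall n, x n.+1 = S ((1 - beta n) *: x n + beta n *: S (u n)).

Let C := fixed_points E S `&` EP E f.

Lemma HEcv' : forall (a c : V) (t : R), E a -> E c -> 0 <= t <= 1 ->
  E (t *: a + (1 - t) *: c).
Proof. exact: HEcv. Qed.
Let yv n := (1 - beta n) *: x n + beta n *: S (u n).

Lemma conv_E (a c : V) (t : R) : E a -> E c -> 0 <= t <= 1 ->
  E ((1 - t) *: a + t *: c).
Proof.
move=> Ea Ec /andP[t0 t1].
have := HEcv' (t:=1 - t) Ea Ec; rewrite (_ : 1 - (1 - t) = t); last by ring.
by apply; apply/andP; split; lra.
Qed.

Lemma xE n : E (x n).
Proof.
elim: n => [|n IH]; first by rewrite Hx00.
rewrite Hxs; apply: HSE; apply: conv_E => //.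
  by apply: HSE; case: (Hu n).
by have := Hbeta n; have := Hb; move=> /andP[? ?] /andP[? ?]; apply/andP; split; lra.
Qed.
Lemma sq_le (a c : R) : 0 <= c -> a ^+ 2 <= c ^+ 2 -> a <= c.
Proof. move=> c0 h; nra. Qed.

Lemma sq_le2 (a c : R) : 0 <= a -> a <= c -> a ^+ 2 <= c ^+ 2.
Proof. move=> a0 h; nra. Qed.

Lemma beta0 n : 0 < beta n.
Proof. by have := Hbeta n; have := Hb; move=> /andP[? ?] /andP[? ?]; lra. Qed.
Lemma beta1 n : beta n <= 1.
Proof. by have := Hbeta n; move=> /andP[? ?]. Qed.
Lemma betab n : b <= beta n.
Proof. by have := Hbeta n; move=> /andP[? ?]. Qed.

Lemma SuE n : E (S (u n)).
Proof. by apply: HSE; case: (Hu n). Qed.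

Lemma yE n : E (yv n).
Proof.
apply: conv_E; [exact: xE|exact: SuE|].
by have := beta0 n; have := beta1 n; move=> ? ?; apply/andP; split; lra.
Qed.

Lemma qne q y : E q -> S q = q -> E y -> `|S y - q| <= `|y - q|.
Proof.
move=> Eq Sq Ey; have := Hhyb Eq Ey; rewrite Sq.
rewrite -!(distrC q) => h.
have h2 : `|S y - q| ^+ 2 <= `|y - q| ^+ 2 by rewrite (distrC (S y)) (distrC y); lra.
by rewrite (distrC q) (distrC q); exact: (sq_le (normr_ge0 _) h2).
Qed.

Lemma res_ineq q n : EP E f q ->
  `|u n - q| ^+ 2 <= `|x n - q| ^+ 2 - `|u n - x n| ^+ 2.
Proof.
move=> [Eq hq]; have [Eu hu] := Hu n.
have h1 := hu q Eq; have h2 := hq (u n) Eu; have h3 := HA2 Eu Eq.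
have h4 : 0 <= (r n)^-1 * ip (q - u n) (u n - x n) by lra.
have h5 : 0 <= ip (q - u n) (u n - x n).
  by rewrite pmulr_rge0 ?invr_gt0 in h4.
have e := normsplit Hip (x n) (u n) q.
have e2 : ip (x n - u n) (u n - q) = ip (q - u n) (u n - x n).
  by rewrite -opprB (ipNl Hip) -(ipNr Hip) opprB (ipC Hip).
rewrite (distrC (u n) (x n)); lra.
Qed.

Lemma fejer q n : C q ->
  `|x n.+1 - q| ^+ 2 <= `|x n - q| ^+ 2 - beta n * `|u n - x n| ^+ 2
     - beta n * (1 - beta n) * `|x n - S (u n)| ^+ 2.
Proof.
move=> [[Eq Sq] EPq].
have h1 : `|x n.+1 - q| <= `|yv n - q| by rewrite Hxs; apply: qne => //; exact: yE.
have h1' : `|x n.+1 - q| ^+ 2 <= `|yv n - q| ^+ 2 by rewrite ler_pXn2r ?nnegrE.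
have e : yv n - q = (1 - beta n) *: (x n - q) + (1 - (1 - beta n)) *: (S (u n) - q).
  by rewrite vec_conv /yv (_ : 1 - (1 - beta n) = beta n) //; ring.
have e2 := norm_convex Hip (1 - beta n) (x n - q) (S (u n) - q).
rewrite vec_sub -e in e2.
have h3 := qne Eq Sq (proj1 (Hu n)).
have h3' : `|S (u n) - q| ^+ 2 <= `|u n - q| ^+ 2 by rewrite ler_pXn2r ?nnegrE.
have h4 := res_ineq n EPq.
have b0 := beta0 n; have b1 := beta1 n.
rewrite (_ : 1 - (1 - beta n) = beta n) in e2; last by ring.
have : beta n * `|S (u n) - q| ^+ 2 <= beta n * (`|x n - q| ^+ 2 - `|u n - x n| ^+ 2).
  by rewrite ler_pM2l //; apply: le_trans h3' h4.
nra.
Qed.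

Lemma fejer_step q n : C q -> `|x n.+1 - q| <= `|x n - q|.
Proof.
move=> Cq; have h := fejer n Cq.
have b0 := beta0 n; have b1 := beta1 n.
have : 0 <= beta n * `|u n - x n| ^+ 2 by rewrite mulr_ge0 ?sqr_ge0 // ltW.
have : 0 <= beta n * (1 - beta n) * `|x n - S (u n)| ^+ 2.
  by rewrite !mulr_ge0 ?sqr_ge0 // ?subr_ge0 // ltW.
move=> ? ?; apply: sq_le => //; lra.
Qed.

Lemma fejer_mono q : C q -> forall n m, (n <= m)%N -> `|x m - q| <= `|x n - q|.
Proof.
move=> Cq n m /subnK <-; elim: (m - n)%N => [|k IH]; first by rewrite add0n.
by rewrite addSn; apply: le_trans (fejer_step _ Cq) IH.
Qed.
Lemma Cp : exists p, C p.
Proof. exact: HC0. Qed.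

Lemma xbound : exists B, forall n, `|x n| <= B /\ `|u n| <= B.
Proof.
have [p Cp] := Cp.
exists (`|x 0%N - p| + `|p|) => n.
have h1 := fejer_mono Cp (leq0n n).
have h2 := res_ineq n (proj2 Cp).
have h3 : `|u n - p| <= `|x n - p|.
  apply: sq_le => //; have := sqr_ge0 `|u n - x n|; lra.
have t1 : `|x n| <= `|x n - p| + `|p|.
  by rewrite -{1}(subrK p (x n)); apply: ler_normD.
have t2 : `|u n| <= `|u n - p| + `|p|.
  by rewrite -{1}(subrK p (u n)); apply: ler_normD.
split; lra.
Qed.

Lemma asym :
  (fun n => `|u n - x n|) @ \oo --> 0 /\ (fun n => `|x n - S (u n)|) @ \oo --> 0.
Proof.
have [p Cp] := Cp.
set d := fun n => `|x n - p| ^+ 2.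
have dmono : {homo d : n m / (n <= m)%N >-> m <= n}.
  by move=> n m nm; rewrite /d; apply: sq_le2 => //; apply: fejer_mono.
have hd : cvgn d.
  by apply: nonincreasing_is_cvgn => //; exists 0 => _ [n _ <-]; rewrite /d sqr_ge0.
set l := limn d.
have h1 : d n @[n --> \oo] --> l := hd.
have h2 : d n.+1 @[n --> \oo] --> l by rewrite cvg_shiftS.
have hc : forall k, (d n - d n.+1) * k @[n --> \oo] --> 0.
  move=> k; rewrite -(mul0r k) -(subrr l); apply: cvgMl; exact: cvgB.
have b0 : 0 < b by case/andP: Hb.
split.
  apply: (@sq_to0 _ _ (fun n => (d n - d n.+1) * b^-1)) => //.
  apply: nearW => n; have := fejer n Cp; rewrite -/(d n) -/(d n.+1) => h.
  have bb := betab n; have b1 := beta1 n.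
  have : 0 <= beta n * (1 - beta n) * `|x n - S (u n)| ^+ 2.
    by rewrite !mulr_ge0 ?sqr_ge0 // ?subr_ge0 // ltW // (lt_le_trans b0).
  have : b * `|u n - x n| ^+ 2 <= beta n * `|u n - x n| ^+ 2.
    by rewrite ler_wpM2r ?sqr_ge0.
  move=> ? ?; rewrite ler_pdivlMr //; lra.
have [k k0 hk] := liminf_pos Hbinf.
apply: (@sq_to0 _ _ (fun n => (d n - d n.+1) * k^-1)) => //.
apply: filterS hk => n hkn; have := fejer n Cp; rewrite -/(d n) -/(d n.+1) => h.
have bb := betab n; have b1 := beta1 n.
have : 0 <= beta n * `|u n - x n| ^+ 2.
  by rewrite mulr_ge0 ?sqr_ge0 // ltW // (lt_le_trans b0).
have : k * `|x n - S (u n)| ^+ 2 <= beta n * (1 - beta n) * `|x n - S (u n)| ^+ 2.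
  by rewrite ler_wpM2r ?sqr_ge0.
move=> ? ?; rewrite ler_pdivlMr //; lra.
Qed.
Lemma E_of_closure (A : set V) (p : V) : A `<=` E -> closure A p -> E p.
Proof.
move=> AE cp; apply: HEcl => B nB; have [z [Az Bz]] := cp B nB.
by exists z; split => //; apply: AE.
Qed.

Lemma sub_closed y c : E y -> closed [set z | E z /\ f y z <= c].
Proof.
move=> Ey p cp.
have Ep : E p by apply: (E_of_closure _ cp) => z [].
split => //; rewrite leNgt; apply/negP => hlt.
have eps0 : 0 < f y p - c by rewrite subr_gt0.
have := (proj2 (HA4 Ey)) p Ep _ eps0 => hn.
have [z [[Ez hz] hz2]] := cp _ hn.
have := hz2 Ez; lra.
Qed.

Lemma sub_convex y c : E y -> convex_set_in [set z | E z /\ f y z <= c].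
Proof.
move=> Ey a c' t [Ea ha] [Ec hc] /andP[t0 t1]; split.
  by apply: HEcv' => //; apply/andP.
apply: le_trans ((proj1 (HA4 Ey)) a c' t Ea Ec _) _; first by apply/andP.
nra.
Qed.

Lemma minty z : E z -> (forall y, E y -> f y z <= 0) -> EP E f z.
Proof.
move=> Ez hz; split => // y Ey.
apply/ler_addgt0Pr => e e0.
have hA3 := HA3 Ez Ey Ey e0.
have h0 : \forall t \near (0:R)^'+, 0 < t /\ t < 1.
  by apply: filterI; [exact: nbhs_right_gt| exact: nbhs_right_lt ltr01].
have [t [[t0 t1] ht]] := filter_ex (filterI h0 hA3).
set yt := t *: y + (1 - t) *: z in ht.
have Eyt : E yt by apply: HEcv' => //; apply/andP; split; lra.
have h1 := HA1 Eyt.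
have h2 := (proj1 (HA4 Eyt)) y z t Ey Ez (ltac:(apply/andP; split; lra)).
rewrite -/yt h1 in h2.
have h3 := hz yt Eyt.
have h4 : 0 <= f yt y by nra.
lra.
Qed.

Lemma EP_char z : EP E f z -> forall y, E y -> f y z <= 0.
Proof.
move=> [Ez hz] y Ey; have := HA2 Ez Ey; have := hz y Ey; lra.
Qed.

Lemma EP_closed : closed (EP E f).
Proof.
move=> p cp.
have Ep : E p by apply: (E_of_closure _ cp) => z [].
apply: minty => // y Ey.
suff : [set z | E z /\ f y z <= 0] p by case.
apply: (sub_closed (c:=0) Ey) => B nB; have [z [EPz Bz]] := cp B nB.
by exists z; split => //; split; [case: EPz|exact: EP_char].
Qed.

Lemma EP_convex : convex_set_in (EP E f).
Proof.
move=> a c t EPa EPc ht.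
have Eac : E (t *: a + (1 - t) *: c) by apply: HEcv' => //; [case: EPa|case: EPc].
apply: minty => // y Ey.
have := sub_convex (c:=0) Ey (conj (proj1 EPa) (EP_char EPa Ey))
  (conj (proj1 EPc) (EP_char EPc Ey)) ht.
by case.
Qed.

Lemma F_closed : closed (fixed_points E S).
Proof.
move=> p cp.
have Ep : E p by apply: (E_of_closure _ cp) => z [].
split => //; apply/eqP; rewrite -subr_eq0 -normr_le0.
apply/ler_addgt0Pr => e e0; rewrite add0r.
have e20 : 0 < e / 2 by rewrite divr_gt0.
have [z [[Ez Sz] bz]] := cp _ (nbhsx_ballx p (e / 2) e20).
move: bz; rewrite -ball_normE /ball_ /= => bz.
have h := qne Ez Sz Ep.
have : `|S p - p| <= `|S p - z| + `|z - p|.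
  by rewrite -{1}(subrK z (S p)) -addrA; apply: ler_normD.
rewrite (distrC z p); lra.
Qed.

Lemma vec_conv2 (t : R) (a c w : V) :
  t *: (w - a) + (1 - t) *: (w - c) = w - (t *: a + (1 - t) *: c).
Proof.
by rewrite -(opprB a) -(opprB c) !scalerN -opprD (vec_conv t a c w) opprB.
Qed.

Lemma F_convex : convex_set_in (fixed_points E S).
Proof.
move=> a c t [Ea Sa] [Ec Sc] ht; have /andP[t0 t1] := ht.
set z := t *: a + (1 - t) *: c.
have Ez : E z by apply: HEcv'.
split => //.
have ha := qne Ea Sa Ez; have hc := qne Ec Sc Ez.
have ha2 := sq_le2 (normr_ge0 _) ha; have hc2 := sq_le2 (normr_ge0 _) hc.
have e1 := norm_convex Hip t (S z - a) (S z - c).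
rewrite vec_conv2 in e1.
have e2 := norm_convex Hip t (z - a) (z - c).
rewrite vec_conv2 subrr normr0 in e2.
rewrite (_ : S z - a - (S z - c) = c - a) in e1; last first.
  by rewrite opprB addrC addrA subrK.
rewrite (_ : z - a - (z - c) = c - a) in e2; last first.
  by rewrite opprB addrC addrA subrK.
apply/eqP; rewrite -subr_eq0; apply/eqP; apply: norm_eq0_sq.
rewrite -/z in e1.
have : t * `|S z - a| ^+ 2 <= t * `|z - a| ^+ 2 by rewrite ler_wpM2l.
have : (1 - t) * `|S z - c| ^+ 2 <= (1 - t) * `|z - c| ^+ 2.
  by rewrite ler_wpM2l // subr_ge0.
rewrite expr0n /= in e2.
lra.
Qed.

Lemma C_closed : closed C.
Proof.
move=> p cp; split.
  by apply: F_closed => B nB; have [z [[Fz _] Bz]] := cp B nB; exists z.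
by apply: EP_closed => B nB; have [z [[_ EPz] Bz]] := cp B nB; exists z.
Qed.

Lemma C_convex : convex_set_in C.
Proof.
move=> a c t [Fa EPa] [Fc EPc] ht; split.
  exact: F_convex.
exact: EP_convex.
Qed.
Lemma dom_to0 (a c : nat -> R) : (forall n, `|a n| <= c n) ->
  c n @[n --> \oo] --> 0 -> a n @[n --> \oo] --> 0.
Proof.
move=> hac hc; apply/cvgrPdist_lt => e e0.
have := @cvgr_lt _ _ _ _ _ _ hc _ e0.
move=> h; apply: filterS (h _) => n hn.
by rewrite sub0r normrN; apply: le_lt_trans (hac n) hn.
Qed.

Lemma Su_u : (fun n => `|S (u n) - u n|) @ \oo --> 0.
Proof.
have [h1 h2] := asym.
apply: (@dom_to0 _ (fun n => `|x n - S (u n)| + `|u n - x n|)).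
  move=> n; rewrite normr_id.
  have -> : S (u n) - u n = (S (u n) - x n) + (x n - u n) by rewrite addrA subrK.
  by apply: le_trans (ler_normD _ _) _; rewrite (distrC (S (u n)) (x n)) (distrC (x n) (u n)).
by rewrite -(addr0 0); apply: cvgD.
Qed.

Section UltraMain.
Variable (U : set_system nat).
Hypothesis HU : UltraFilter U.
Hypothesis HUo : (\oo : set_system nat) `<=` U.
Variable w : V.
Hypothesis Hw : forall y, ul U (fun n => ip (x n) y) = ip w y.

Lemma Hw_u : forall y, ul U (fun n => ip (u n) y) = ip w y.
Proof.
have [B hB] := xbound.
have hx : forall n, `|x n| <= B by move=> n; case: (hB n).
have hu : forall n, `|u n| <= B by move=> n; case: (hB n).
move=> y; rewrite -Hw.
rewrite (@ul_ext R U _ (fun n => ip (x n) y + ip (u n - x n) y)); last first.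
  by move=> n; rewrite (ipBl Hip); ring.
have hux : forall n, `|u n - x n| <= B + B.
  by move=> n; apply: le_trans (ler_normB _ _) _; apply: lerD.
rewrite (ulD HU); [|exact: (bdd_ip Hip _ hx)|exact: (bdd_ip Hip _ hux)].
rewrite [X in _ + X](ul_cvgn HU HUo (l := 0)) ?addr0 //.
apply: (@dom_to0 _ (fun n => `|u n - x n| * `|y|)).
  by move=> n; apply: CS.
rewrite -(mul0r `|y|); apply: cvgMl; exact: (proj1 asym).
Qed.

Lemma w_E : E w.
Proof.
have [B hB] := xbound.
have hx : forall n, `|x n| <= B by move=> n; case: (hB n).
apply: (weak_closed Hip HU HUo HEcl HEcv HE0 hx _ Hw).
by apply: nearW => n; apply: xE.
Qed.

Lemma w_F : S w = w.
Proof.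
have [B hB] := xbound.
have hu : forall n, `|u n| <= B by move=> n; case: (hB n).
have Ew := w_E.
set g := fun n => `|w - S w| ^+ 2 + 2 * ip (u n - w) (w - S w).
set K := `|gam| + `|lam| + 2 * (`|gam| + `|lam|) * (B + `|w| + `|S w|).
have gle : forall n, g n <= K * `|S (u n) - u n| + K * `|S (u n) - u n| ^+ 2.
  move=> n; have Eun := proj1 (Hu n).
  have hh := Hhyb Eun Ew.
  have s1 := normsplit Hip (S (u n)) (u n) (S w).
  have s2 := normsplit Hip (S (u n)) (u n) w.
  have s3 := normsplit Hip (u n) w (S w).
  set e := S (u n) - u n in s1 s2 *.
  have c1 := CS Hip e (u n - S w).
  have c2 := CS Hip e (u n - w).
  have t1 : `|u n - S w| <= B + `|S w|.
    by apply: le_trans (ler_normB _ _) _; rewrite lerD2r.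
  have t2 : `|u n - w| <= B + `|w|.
    by apply: le_trans (ler_normB _ _) _; rewrite lerD2r.
  have ne := normr_ge0 e.
  have d1 : `|e| * `|u n - S w| <= `|e| * (B + `|S w|) by rewrite ler_wpM2l.
  have d2 : `|e| * `|u n - w| <= `|e| * (B + `|w|) by rewrite ler_wpM2l.
  set P1 := ip e (u n - S w) in s1 c1.
  set P2 := ip e (u n - w) in s2 c2.
  have l1 : - (lam * P1) <= `|lam| * `|P1|.
    by rewrite -normrM -normrN; apply: ler_norm.
  have l2 : gam * P2 <= `|gam| * `|P2| by rewrite -normrM; apply: ler_norm.
  have l3 : `|lam| * `|P1| <= `|lam| * (`|e| * (B + `|S w|)).
    by rewrite ler_wpM2l //; apply: le_trans c1 d1.
  have l4 : `|gam| * `|P2| <= `|gam| * (`|e| * (B + `|w|)).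
    by rewrite ler_wpM2l //; apply: le_trans c2 d2.
  have l5 : gam * `|e| ^+ 2 <= `|gam| * `|e| ^+ 2.
    by rewrite ler_wpM2r ?sqr_ge0 // ler_norm.
  have l6 : - (lam * `|e| ^+ 2) <= `|lam| * `|e| ^+ 2.
    by rewrite -mulNr ler_wpM2r ?sqr_ge0 // -normrN ler_norm.
  have m1 : `|gam| * (`|e| * (B + `|w|)) <= `|gam| * (`|e| * (B + `|w| + `|S w|)).
    by rewrite ler_wpM2l // ler_wpM2l // lerDl.
  have m2 : `|lam| * (`|e| * (B + `|S w|)) <= `|lam| * (`|e| * (B + `|w| + `|S w|)).
    by rewrite ler_wpM2l // ler_wpM2l // -addrA lerD2l lerDr.
  have B0 : 0 <= B by apply: le_trans (hu 0%N).
  have nn : 0 <= `|e| * (B + `|w| + `|S w|) by rewrite mulr_ge0 // !addr_ge0.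
  rewrite /g /K.
  have ds : `|w - S w| ^+ 2 + 2 * ip (u n - w) (w - S w) =
    `|u n - S w| ^+ 2 - `|u n - w| ^+ 2 by rewrite s3; ring.
  rewrite ds.
  have hh2 : `|u n - S w| ^+ 2 - `|u n - w| ^+ 2 <=
      gam * (`|e| ^+ 2 + 2 * P2) - lam * (`|e| ^+ 2 + 2 * P1).
    by rewrite s1 s2 in hh; lra.
  have n1 : 0 <= (`|gam| + `|lam|) * `|e| by rewrite mulr_ge0 // addr_ge0.
  have n2 : 0 <= 2 * (`|gam| + `|lam|) * (B + `|w| + `|S w|) * `|e| ^+ 2.
    by rewrite !mulr_ge0 ?sqr_ge0 // ?addr_ge0.
  lra.
have gb : bdd g.
  exists (`|w - S w| ^+ 2 + 2 * ((B + `|w|) * `|w - S w|)) => n.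
  rewrite /g; apply: le_trans (ler_normD _ _) _.
  rewrite ger0_norm ?sqr_ge0 // lerD2l normrM ger0_norm //.
  rewrite ler_pM2l //; apply: le_trans (CS Hip _ _) _; apply: ler_wpM2r => //.
  by apply: le_trans (ler_normB _ _) _; rewrite lerD2r.
have hg : ul U g <= 0.
  apply: (ul_le0 HU HUo) => // e e0.
  apply: filterS (poly_to0 K Su_u e0) => n hn.
  exact: le_trans (gle n) hn.
have e2 : ul U g = `|w - S w| ^+ 2 - 2 * ip w (w - S w) + 2 * ip w (w - S w).
  rewrite (@ul_ext R U _ (fun n => (`|w - S w| ^+ 2 - 2 * ip w (w - S w)) +
      2 * ip (u n) (w - S w))); last first.
    by move=> n; rewrite /g (ipBl Hip); ring.
  rewrite (ulD HU); [|exact: bdd_cst|apply: bddZ; exact: (bdd_ip Hip _ hu)].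
  rewrite (ul_cst HU HUo) (ulZ HU); last exact: (bdd_ip Hip _ hu).
  by rewrite Hw_u.
rewrite e2 in hg.
apply/eqP; rewrite eq_sym -subr_eq0; apply/eqP; apply: norm_eq0_sq; lra.
Qed.

Lemma w_EP : EP E f w.
Proof.
have [B hB] := xbound.
have hu : forall n, `|u n| <= B by move=> n; case: (hB n).
have Ew := w_E.
apply: minty => // y Ey.
apply/ler_addgt0Pr => d d0; rewrite add0r.
have [kr kr0 hkr] := liminf_pos Hrinf.
set K := kr^-1 * (`|y| + B).
have ev : \forall n \near \oo, E (u n) /\ f y (u n) <= d.
  apply: filterS (filterI hkr (poly_to0 K (proj1 asym) d0)) => n [hk hp].
  have [Eu hun] := Hu n.
  split => //.
  have h1 := hun y Ey; have h2 := HA2 Eu Ey.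
  have c1 := CS Hip (y - u n) (u n - x n).
  have t1 : `|y - u n| <= `|y| + B.
    by apply: le_trans (ler_normB _ _) _; rewrite lerD2l.
  have rn := Hr n.
  have ir : (r n)^-1 <= kr^-1 by rewrite lef_pV2 ?posrE.
  have ir0 : 0 <= (r n)^-1 by rewrite invr_ge0 ltW.
  have q1 : (r n)^-1 * ip (y - u n) (u n - x n) <=
      (r n)^-1 * (`|y - u n| * `|u n - x n|).
    by rewrite ler_wpM2l //; apply: le_trans (ler_norm _) c1.
  have q2 : (r n)^-1 * (`|y - u n| * `|u n - x n|) <=
      kr^-1 * ((`|y| + B) * `|u n - x n|).
    by apply: ler_pM => //; rewrite ler_wpM2r.
  have q3 : 0 <= K * `|u n - x n| ^+ 2.
    have B0 : 0 <= B by apply: le_trans (hu 0%N).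
    apply: mulr_ge0; last exact: sqr_ge0.
    by apply: mulr_ge0; [rewrite invr_ge0 ltW| apply: addr_ge0].
  rewrite /K in hp q3; lra.
have Kd : [set z | E z /\ f y z <= d] !=set0.
  by have [n hn] := filter_ex ev; exists (u n).
have := weak_closed Hip HU HUo (sub_closed (c:=d) Ey) (sub_convex (c:=d) Ey) Kd hu ev Hw_u.
by case.
Qed.

Lemma w_C : C w.
Proof. by split; [split; [exact: w_E| exact: w_F]| exact: w_EP]. Qed.

End UltraMain.
Lemma proj_seq : exists p : nat -> V, forall n, is_metric_proj C (x n) (p n).
Proof.
have /choice [p hp] : forall n, exists q, is_metric_proj C (x n) q.
  move=> n; exact: (proj_exists Hip (x n) C_closed C_convex HC0).
by exists p.
Qed.

Lemma p_cvg (p : nat -> V) : (forall n, is_metric_proj C (x n) (p n)) ->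
  cvg (p n @[n --> \oo]).
Proof.
move=> hp.
set a := fun n => `|x n - p n| ^+ 2.
have st : forall n m, (n <= m)%N -> `|x m - p n| <= `|x n - p n|.
  by move=> n m nm; apply: fejer_mono => //; case: (hp n).
have am : forall n m, (n <= m)%N -> a m <= `|x m - p n| ^+ 2.
  move=> n m nm; rewrite /a; apply: sq_le2 => //.
  by apply: (proj2 (hp m)); case: (hp n).
have amono : {homo a : n m / (n <= m)%N >-> m <= n}.
  move=> n m nm; apply: le_trans (am _ _ nm) _.
  by rewrite /a; apply: sq_le2 => //; apply: st.
have ha : cvgn a.
  by apply: nonincreasing_is_cvgn => //; exists 0 => _ [n _ <-]; rewrite /a sqr_ge0.
have age := nonincreasing_cvgn_ge amono ha.
have pp : forall n m, (n <= m)%N -> `|p m - p n| ^+ 2 <= a n - a m.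
  move=> n m nm.
  have s := normsplit Hip (x m) (p m) (p n).
  have v := proj_var Hip C_convex (hp m) (proj1 (hp n)).
  have e : ip (x m - p m) (p m - p n) = - ip (x m - p m) (p n - p m).
    by rewrite -(ipNr Hip) opprB.
  have := am _ _ nm; have := st _ _ nm.
  have : `|x m - p n| ^+ 2 <= a n by rewrite /a; apply: sq_le2 => //; apply: st.
  rewrite /a in s *; lra.
apply: cauchy_cvg; apply: cauchy_exP => eps eps0.
have e2 : 0 < eps ^+ 2 by rewrite exprn_gt0.
have hlt : limn a < limn a + eps ^+ 2 by rewrite ltrDl.
have [N _ hN] := @cvgr_lt _ _ _ _ _ _ ha _ hlt.
have aN := hN N (leqnn N).
exists (p N); exists N => // m /= Nm.
rewrite -ball_normE /ball_ /=.
have := pp _ _ Nm; have := age m.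
move=> h1 h2; rewrite distrC.
have : `|p m - p N| ^+ 2 < eps ^+ 2 by lra.
have := normr_ge0 (p m - p N); nra.
Qed.

Lemma norm_to0 (p : nat -> V) (v : V) : p n @[n --> \oo] --> v ->
  (fun n => `|p n - v|) @ \oo --> 0.
Proof.
move=> pv; apply/cvgrPdist_lt => e e0.
have := @cvgr_dist_lt _ _ _ _ _ _ _ pv _ e0.
move=> h; apply: filterS (h _) => n hn.
by rewrite sub0r normrN normr_id distrC.
Qed.

Section UltraEq.
Variable (U : set_system nat).
Hypothesis HU : UltraFilter U.
Hypothesis HUo : (\oo : set_system nat) `<=` U.
Variable w : V.
Hypothesis Hw : forall y, ul U (fun n => ip (x n) y) = ip w y.
Variables (p : nat -> V) (v : V).
Hypothesis hp : forall n, is_metric_proj C (x n) (p n).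
Hypothesis pv : p n @[n --> \oo] --> v.

Lemma w_eq_v : w = v.
Proof.
have [B hB] := xbound.
have hx : forall n, `|x n| <= B by move=> n; case: (hB n).
have Cw := w_C HU HUo Hw.
have B0 : 0 <= B by apply: le_trans (hx 0%N).
set g := fun n => ip (x n - v) (w - v).
set K := B + `|v| + `|w - v|.
have gle : forall n, g n <= K * `|p n - v| + K * `|p n - v| ^+ 2.
  move=> n.
  have h0 := proj_var Hip C_convex (hp n) Cw.
  have e : g n = ip (x n - p n) (w - p n) + ip (x n - v) (p n - v)
      + ip (p n - v) (w - v) - `|p n - v| ^+ 2.
    rewrite /g (ipnorm Hip) !(ipBl Hip) !(ipBr Hip) (ipC Hip v (p n)); ring.
  have c1 := CS Hip (x n - v) (p n - v).
  have c2 := CS Hip (p n - v) (w - v).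
  have t1 : `|x n - v| <= B + `|v|.
    by apply: le_trans (ler_normB _ _) _; rewrite lerD2r.
  have nd := normr_ge0 (p n - v).
  have d1 : `|x n - v| * `|p n - v| <= (B + `|v|) * `|p n - v| by rewrite ler_wpM2r.
  have l1 := ler_norm (ip (x n - v) (p n - v)).
  have l2 := ler_norm (ip (p n - v) (w - v)).
  have n2 : 0 <= K * `|p n - v| ^+ 2.
    by rewrite mulr_ge0 ?sqr_ge0 // /K !addr_ge0.
  rewrite e /K; rewrite /K in n2; have := sqr_ge0 `|p n - v|; lra.
have gb : bdd g.
  exists ((B + `|v|) * `|w - v|) => n; apply: le_trans (CS Hip _ _) _.
  by rewrite ler_wpM2r //; apply: le_trans (ler_normB _ _) _; rewrite lerD2r.
have hg : ul U g <= 0.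
  apply: (ul_le0 HU HUo) => // e e0.
  apply: filterS (poly_to0 K (norm_to0 pv) e0) => n hn.
  exact: le_trans (gle n) hn.
have e2 : ul U g = ip w (w - v) - ip v (w - v).
  rewrite (@ul_ext R U _ (fun n => ip (x n) (w - v) + - ip v (w - v))); last first.
    by move=> n; rewrite /g (ipBl Hip).
  rewrite (ulD HU); [|exact: (bdd_ip Hip _ hx)|exact: bdd_cst].
  by rewrite (ul_cst HU HUo) Hw.
rewrite e2 -(ipBl Hip) -(ipnorm Hip) in hg.
by apply/eqP; rewrite -subr_eq0; apply/eqP; apply: norm_eq0_sq.
Qed.

End UltraEq.

Lemma weak_lim (p : nat -> V) (v : V) :
  (forall n, is_metric_proj C (x n) (p n)) -> p n @[n --> \oo] --> v ->
  weak_cvg ip x v.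
Proof.
move=> hp pv y.
have [B hB] := xbound.
have hx : forall n, `|x n| <= B by move=> n; case: (hB n).
set a := fun n => ip (x n) y.
set l := ip v y.
apply/cvgrPdist_lt => eps eps0.
apply: contrapT => hn.
set A := [set n | ~ (`|l - a n| < eps)].
have freq : forall N, exists n, (N <= n)%N /\ A n.
  move=> N; apply: contrapT => hN; apply: hn.
  exists N => // n /= Nn; apply: contrapT => hA; apply: hN.
  by exists n.
set G := filter_from setT (fun N => [set n | (N <= n)%N /\ A n]).
have FG : Filter G.
  apply: filter_from_filter; first by exists 0%N.
  move=> i j _ _; exists (maxn i j) => // n [hn' An].
  by split; split => //; apply: leq_trans hn'; rewrite ?leq_maxl ?leq_maxr.
have PG : ProperFilter G.
  apply: filter_from_proper => N _; have [n hn'] := freq N; by exists n.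
have [U [HU sGU]] := ultraFilterLemma PG.
have HUo : (\oo : set_system nat) `<=` U.
  move=> P [N _ hP]; apply: sGU; exists N => // n [Nn _]; exact: hP.
have UA : U A by apply: sGU; exists 0%N => // n [].
have [w Hw] := weak_ul Hip HU HUo hx.
have wv := w_eq_v HU HUo Hw hp pv.
have ba : bdd a by exact: (bdd_ip Hip _ hx).
have ula : ul U a = l by rewrite /a Hw wv.
have ca := ul_cvg HU ba.
have [Up|Un] := in_ultra_setVsetC [set n | l + eps <= a n] HU.
  have : l + eps <= ul U a.
    by apply: limr_ge; [exact: cvgP ca| exact: Up].
  rewrite ula; lra.
have : ul U a <= l - eps.
  apply: limr_le; first exact: cvgP ca.
  apply: filterS (filterI UA Un) => n [An Nn].
  move/negP: An; rewrite -leNgt ler_normr => /orP[|]; first lra.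
  by move/negP: Nn; rewrite -ltNge; lra.
rewrite ula; lra.
Qed.

Lemma main_res : exists v, C v /\ weak_cvg ip x v /\
    (forall p : nat -> V, (forall n, is_metric_proj C (x n) (p n)) ->
       p n @[n --> \oo] --> v).
Proof.
have [p hp] := proj_seq.
have cp := p_cvg hp.
set v := lim (p n @[n --> \oo]).
have pv : p n @[n --> \oo] --> v := cp.
have Cv : C v.
  apply: (@closed_cvg nat V \oo _ p C C_closed _ v pv).
  by apply: nearW => n; case: (hp n).
exists v; split => //; split; first exact: weak_lim hp pv.
move=> p' hp'.
have -> : p' = p.
  apply: funext => n; apply: (proj_uniq Hip C_convex (hp' n) (hp n)).
exact: pv.
Qed.
End Main.

Unset Implicit Arguments.

Theorem corollary3p3 (R : realType) (V : completeNormedModType R)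
  (ip : V -> V -> R) (E : set V) (f : V -> V -> R) (S : V -> V)
  (lam gam : R) (r beta : nat -> R) (b : R) (x0 : V) (x u : nat -> V) :
  is_inner_product ip ->
  E !=set0 -> closed E -> convex_set_in E ->
  cond_A1 E f -> cond_A2 E f -> cond_A3 E f -> cond_A4 E f ->
  (forall y, E y -> E (S y)) ->
  generalized_hybrid E S lam gam ->
  fixed_points E S `&` EP E f !=set0 ->
  (forall n, 0 < r n) ->
  (0 < limn_einf (fun n => (r n)%:E))%E ->
  0 < b < 1 ->
  (forall n, b <= beta n <= 1) ->
  (0 < limn_einf (fun n => (beta n * (1 - beta n))%:E))%E ->
  E x0 -> x 0%N = x0 ->
  (forall n, E (u n) /\
     forall y, E y -> 0 <= f (u n) y + (r n)^-1 * ip (y - u n) (u n - x n)) ->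
  (forall n, x n.+1 = S ((1 - beta n) *: x n + beta n *: S (u n))) ->
  exists v, (fixed_points E S `&` EP E f) v /\ weak_cvg ip x v /\
    (forall p : nat -> V,
       (forall n, is_metric_proj (fixed_points E S `&` EP E f) (x n) (p n)) ->
       p @ \oo --> v).
Proof.
move=> *; apply: main_res; eassumption.
Qed.
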